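(* Let $n\ge2$, $1\le k<n$, $\alpha_1>0$, $\alpha_2>\alpha_3>0$, and let $S_{AV}=\{i_1,\dots,i_k\}\subseteq\{1,\dots,n\}$ be the set of AV indices. For the mixed traffic system $\dot x=A_kx+B_ku$ (defined in the context): (1) $(A_k,B_k)$ is not completely controllable; the vector $w=(1,0,1,0,\dots,1,0)^{\mathsf T}\in\mathbb R^{2n}$ satisfies $w^{\mathsf T}A_k=0$, $w^{\mathsf T}B_k=0$, so $\sum_{i=1}^n\tilde s_i(t)$ is constant along all trajectories, and $0$ is an uncontrollable eigenvalue whose algebraic multiplicity in the uncontrollable part is one. (2) $(A_k,B_k)$ is stabilizable in the sense that every eigenvalue $\lambda$ of $A_k$ with $\operatorname{rank}[\lambda I-A_k,\ B_k]<2n$ satisfies $\lambda=0$ or $\operatorname{Re}\lambda<0$; equivalently there exists $K\in\mathbb R^{k\times2n}$ such that $A_k-B_kK$ has a simple eigenvalue $0$ and all other eigenvalues with negative real part.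
   Context: $n$ vehicles on a single-lane ring road; vehicle $i$ follows vehicle $i-1$, vehicle $1$ follows vehicle $n$. Vehicles with index in $S_{AV}$ are autonomous (acceleration is a control input), the others human-driven. State $x=(\tilde s_1,\tilde v_1,\dots,\tilde s_n,\tilde v_n)^{\mathsf T}$, input $u=(u_{i_1},\dots,u_{i_k})^{\mathsf T}$. Define $A_1=\begin{bmatrix}0&-1\\ \alpha_1&-\alpha_2\end{bmatrix}$, $A_2=\begin{bmatrix}0&1\\0&\alpha_3\end{bmatrix}$, $C_1=\begin{bmatrix}0&-1\\0&0\end{bmatrix}$, $C_2=\begin{bmatrix}0&1\\0&0\end{bmatrix}$. $A_k$ is the $n\times n$ block matrix with $2\times 2$ blocks where, for each $r=1,\dots,n$, block $(r,r)$ is $C_1$ if $r\in S_{AV}$ and $A_1$ otherwise, block $(r,r-1)$ (with $r-1$ read as $n$ when $r=1$) is $C_2$ if $r\in S_{AV}$ and $A_2$ otherwise, and all other blocks are zero. $B_k=[P_1,\dots,P_k]\in\mathbb R^{2n\times k}$, where $P_r$ is the $2n$-vector with a $1$ in entry $2i_r$ and zeros elsewhere. *)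

(* Defs.v *)
From HB Require Import structures.
From mathcomp Require Import all_boot all_order all_algebra.
Set Implicit Arguments. Unset Strict Implicit. Unset Printing Implicit Defensive.
Import Order.TTheory GRing.Theory Num.Theory.
Local Open Scope ring_scope.

(* Vehicles are indexed 0..n-1 (paper: 1..n).  State index p : 'I_(2*n):
   vehicle p %/ 2, component p %% 2 (0 = spacing s~, 1 = velocity v~). *)

Section Traffic.
Variable C : numClosedFieldType.

Definition blkA1 (a1 a2 : C) (a b : nat) : C :=
  match a, b with O, S O => -1 | S O, O => a1 | S O, S O => - a2 | _, _ => 0 end.
Definition blkA2 (a3 : C) (a b : nat) : C :=
  match a, b with O, S O => 1 | S O, S O => a3 | _, _ => 0 end.
Definition blkC1 (a b : nat) : C :=
  match a, b with O, S O => -1 | _, _ => 0 end.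
Definition blkC2 (a b : nat) : C :=
  match a, b with O, S O => 1 | _, _ => 0 end.

Definition isAV n (S : {set 'I_n}) (r : nat) : bool := [exists i in S, val i == r].

Definition Ak (a1 a2 a3 : C) n (S : {set 'I_n}) : 'M[C]_(2 * n) :=
  \matrix_(p, q)
    let r := (p %/ 2)%N in let c := (q %/ 2)%N in
    let a := (p %% 2)%N in let b := (q %% 2)%N in
    if c == r then (if isAV S r then blkC1 a b else blkA1 a1 a2 a b)
    else if c == ((r + n - 1) %% n)%N
    then (if isAV S r then blkC2 a b else blkA2 a3 a b)
    else 0.

(* the input matrix B_k, columns ordered by increasing AV index
   (enum_val r is the r-th element of S in increasing order) *)
Definition Bk n (S : {set 'I_n}) : 'M[C]_(2 * n, #|S|) :=
  \matrix_(p, r) (val p == (2 * val (enum_val r : 'I_n)).+1)%N%:R.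

(* w = (1,0,1,0,...,1,0) as a row vector (so w^T A is w *m A) *)
Definition wvec n : 'rV[C]_(2 * n) := \row_j (~~ odd j)%:R.

(* matrix powers for arbitrary size *)
Definition mxpow N (A : 'M[C]_N) (i : nat) : 'M[C]_N := iter i (mulmx A) 1%:M.

(* Controllable subspace (column space of [B, AB, ..., A^(N-1) B]),
   represented as a row space (of the transposes). *)
Definition ctrb_space N m (A : 'M[C]_N) (B : 'M[C]_(N, m)) : 'M[C]_N :=
  (\sum_(i < N) <<B^T *m mxpow A^T i>>)%MS.

Definition controllable N m (A : 'M[C]_N) (B : 'M[C]_(N, m)) : bool :=
  \rank (ctrb_space A B) == N.

Definition uncontrollable_eig N m (A : 'M[C]_N) (B : 'M[C]_(N, m)) (l : C) : bool :=
  eigenvalue A l && (\rank (row_mx (l%:M - A) B) < N)%N.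

(* Matrix of A restricted to the (A-invariant) controllable subspace,
   in the basis row_base (ctrb_space A B). *)
Definition ctrb_restr N m (A : 'M[C]_N) (B : 'M[C]_(N, m))
  : 'M[C]_(\rank (ctrb_space A B)) :=
  let Q := row_base (ctrb_space A B) in Q *m A^T *m pinvmx Q.

(* characteristic polynomial of the uncontrollable part (A_22 in the
   Kalman decomposition) = char_poly A / char_poly (A restricted to the
   controllable subspace) *)
Definition unctrb_char_poly N m (A : 'M[C]_N) (B : 'M[C]_(N, m)) : {poly C} :=
  char_poly A %/ char_poly (ctrb_restr A B).

End Traffic.

(* Main.v *)
Require Import Defs.
From HB Require Import structures.
From mathcomp Require Import all_boot all_order all_algebra.
Set Warnings "-notation-overridden,-ambiguous-paths".
From mathcomp Require Import zify ring.
Set Implicit Arguments. Unset Strict Implicit. Unset Printing Implicit Defensive.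
Import Order.TTheory GRing.Theory Num.Theory.
Local Open Scope ring_scope.


Section Gen.
Variable F : fieldType.

Lemma complete_basis r s (Q : 'M[F]_(r, r + s)) :
  row_free Q -> exists Q2 : 'M_(s, r + s), col_mx Q Q2 \in unitmx.
Proof.
move=> hQ; exists (dsubmx (row_ebase Q)).
have eQ : Q = col_ebase Q *m usubmx (row_ebase Q).
  rewrite -{1}(mulmx_ebase Q) (eqP hQ) pid_mx_row -{1}(vsubmxK (row_ebase Q)).
  by rewrite -mulmxA mul_row_col mul1mx mul0mx addr0.
have -> : col_mx Q (dsubmx (row_ebase Q)) =
   block_mx (col_ebase Q) 0 0 1%:M *m row_ebase Q.
  set U := row_ebase Q; rewrite [in RHS]/U -(vsubmxK (row_ebase Q)) -/U.
  by rewrite mul_block_col !mul0mx mul1mx addr0 add0r -eQ.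
rewrite unitmx_mul row_ebase_unit andbT unitmxE det_ublock det1 mulr1 -unitmxE.
exact: col_ebase_unit.
Qed.

Lemma stable_block r s (A : 'M[F]_(r + s)) (Q : 'M_(r, r + s)) (Q2 : 'M_(s, r + s)) :
  col_mx Q Q2 \in unitmx -> (Q *m A <= Q)%MS ->
  col_mx Q Q2 *m A *m invmx (col_mx Q Q2) =
  block_mx (conjmx Q A) 0 (lsubmx (Q2 *m A *m invmx (col_mx Q Q2)))
                          (rsubmx (Q2 *m A *m invmx (col_mx Q Q2))).
Proof.
move=> hP hst.
rewrite /block_mx hsubmxK mul_col_mx mul_col_mx; congr col_mx.
have -> : Q *m A = row_mx (conjmx Q A) 0 *m col_mx Q Q2.
  by rewrite mul_row_col mul0mx addr0 /conjmx mulmxKpV.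
by rewrite mulmxK.
Qed.

Lemma char_poly_sim N (A P : 'M[F]_N) : P \in unitmx ->
  char_poly (P *m A *m invmx P) = char_poly A.
Proof.
move=> hP; rewrite /char_poly /char_poly_mx.
have e1 : map_mx polyC P *m map_mx polyC (invmx P) = 1%:M.
  by rewrite -map_mxM mulmxV // map_mx1.
have -> : 'X%:M - map_mx polyC (P *m A *m invmx P) =
   map_mx polyC P *m ('X%:M - map_mx polyC A) *m map_mx polyC (invmx P).
  rewrite mulmxBr mulmxBl !map_mxM; congr (_ - _).
  by rewrite scalar_mxC -mulmxA e1 mulmx1.
by rewrite !det_mulmx mulrAC -det_mulmx e1 det1 mul1r.
Qed.

Lemma char_poly_lblock r s (M : 'M[F]_r) (X : 'M_(s, r)) (M2 : 'M_s) :
  char_poly (block_mx M 0 X M2) = char_poly M * char_poly M2.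
Proof.
rewrite /char_poly /char_poly_mx map_block_mx scalar_mx_block opp_block_mx
  add_block_mx map_mx0 oppr0 addr0.
by rewrite det_lblock.
Qed.

Lemma char_poly_tr N (A : 'M[F]_N) : char_poly A^T = char_poly A.
Proof.
rewrite /char_poly -[in RHS]det_tr /char_poly_mx.
by rewrite linearB /= tr_scalar_mx map_trmx.
Qed.

Lemma simple0 N (M : 'M[F]_N) (w : 'rV_N) : w != 0 -> w *m M = 0 ->
  (forall u : 'rV_N, (u *m M <= w)%MS -> (u <= w)%MS) ->
  mup 0 (char_poly M) = 1%N.
Proof.
case: N M w => [|s] M w hw0 hwM hu.
  by case/negP: hw0; apply/eqP/matrixP => i [].
have hwf : row_free w by rewrite /row_free rank_rV hw0.
have [Q2 hP] := complete_basis (s := s) hwf.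
have hst : (w *m M <= w)%MS by rewrite hwM sub0mx.
have hB := stable_block hP hst.
have hc : conjmx w M = 0 by rewrite /conjmx hwM !mul0mx.
rewrite hc in hB.
set X := lsubmx _ in hB; set M2 := rsubmx _ in hB.
have hchar : char_poly M = 'X * char_poly M2.
  rewrite -(char_poly_sim M hP) hB.
  transitivity (char_poly (0 : 'M[F]_1) * char_poly M2).
    exact: (char_poly_lblock (0 : 'M[F]_1) X M2).
  congr (_ * _).
  rewrite /char_poly /char_poly_mx map_mx0 subr0 det_mx11 mxE eqxx /=.
  by rewrite mulr1n.
have hM2 : M2 \in unitmx.
  rewrite -row_free_unit -kermx_eq0; apply/rowV0P => y.
  rewrite sub_kermx => /eqP hy.
  pose P := col_mx w Q2.
  set u := row_mx (0 : 'rV_1) y *m P.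
  have huM : u *m M = (y *m X) *m w.
    have -> : u *m M = row_mx (0 : 'rV_1) y *m (P *m M *m invmx P) *m P.
      by rewrite /u !mulmxA mulmxKV.
    rewrite hB mul_row_block !mul0mx !add0r hy mul_row_col mul0mx addr0.
    by [].
  have := hu u; rewrite huM submxMl => /(_ isT) /sub_rVP [d hd].
  have : row_mx (0 : 'rV_1) y *m P = row_mx (d%:M : 'M_1) 0 *m P.
    by rewrite -/u hd mul_row_col mul0mx addr0 mul_scalar_mx.
  move/(congr1 (mulmx^~ (invmx P))); rewrite !mulmxK //.
  by case/eq_row_mx.
rewrite hchar mupM ?monic_neq0 ?char_poly_monic ?polyX_eq0 //.
have -> : mup 0 ('X : {poly F}) = 1%N.
  by have := mup_XsubCX 1 (0 : F) 0; rewrite expr1 subr0 eqxx.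
rewrite mupNroot //= /root horner_coef0 char_poly_det mulf_eq0 negb_or.
rewrite expf_neq0 ?oppr_eq0 ?oner_eq0 //=.
  by rewrite unitmxE unitfE in hM2.
exact: monicX.
Qed.

Lemma kalman_gen N r (A : 'M[F]_N) (Q : 'M_(r, N)) :
  row_free Q -> (Q *m A^T <= Q)%MS ->
  exists s (M2 : 'M_s) (R2 : 'M_(s, N)),
  [/\ row_free R2, R2 *m Q^T = 0,
      forall u : 'rV_N, u *m Q^T = 0 -> (u <= R2)%MS,
      M2 *m R2 = R2 *m A &
      char_poly A = char_poly (conjmx Q A^T) * char_poly M2].
Proof.
move=> hQ hst.
have rN : (r <= N)%N by rewrite -(eqP hQ) rank_leq_col.
have [s eN] : exists s, N = (r + s)%N by exists (N - r)%N; rewrite subnKC.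
subst N.
have [Q2 hP] := complete_basis hQ.
set P := col_mx Q Q2 in hP.
have hB := stable_block hP hst.
set X := lsubmx _ in hB; set M2 := rsubmx _ in hB.
set R2 := dsubmx (invmx P)^T.
have hPt : P^T \in unitmx by rewrite unitmx_tr.
have e1 : (invmx P)^T *m P^T = 1%:M by rewrite -trmx_mul mulmxV // trmx1.
have e2 : R2 *m P^T = row_mx 0 1%:M.
  have := congr1 dsubmx e1.
  rewrite -[(invmx P)^T](vsubmxK) mul_col_mx col_mxKd => ->.
  by rewrite scalar_mx_block /block_mx col_mxKd.
have e3 : R2 *m Q^T = 0 /\ R2 *m Q2^T = 1%:M.
  by move: e2; rewrite /P tr_col_mx mul_mx_row => /eq_row_mx.
case: e3 => e3 e4.
have hR2 : row_free R2.
  rewrite /row_free eqn_leq rank_leq_row /=.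
  by rewrite -{1}(mxrank1 F s) -e4 mxrankM_maxl.
exists s, M2^T, R2; split => //.
- move=> u hu.
  have hk : (R2 <= kermx Q^T)%MS by apply/sub_kermxP.
  have := mxrank_leqif_sup hk; rewrite mxrank_ker mxrank_tr (eqP hQ) (eqP hR2).
  rewrite addKn => /geq_leqif; rewrite leqnn => hk2.
  by apply: submx_trans (esym hk2 : _ = true) ; apply/sub_kermxP.
- have hBt := congr1 trmx hB.
  rewrite tr_block_mx !trmx_mul trmxK in hBt.
  have := congr1 dsubmx hBt.
  rewrite /block_mx col_mxKd -[(invmx P)^T](vsubmxK) !mul_col_mx col_mxKd.
  move=> h.
  have : R2 *m A *m P^T = M2^T *m R2 *m P^T.
    by rewrite -mulmxA -/R2 h -mulmxA e2 mul_mx_row mulmx0 mulmx1 trmx0.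
  move/(congr1 (mulmx^~ (invmx P^T))); rewrite !mulmxK //.
- rewrite -char_poly_tr -(char_poly_sim A^T hP) hB char_poly_lblock.
  by rewrite char_poly_tr.
Qed.

Lemma simple0_restr N s (A : 'M[F]_N) (M2 : 'M_s) (R2 : 'M_(s, N)) (w : 'rV_N) :
  row_free R2 -> M2 *m R2 = R2 *m A -> (w <= R2)%MS -> w != 0 -> w *m A = 0 ->
  (forall u : 'rV_N, (u <= R2)%MS -> (u *m A <= w)%MS -> (u <= w)%MS) ->
  mup 0 (char_poly M2) = 1%N.
Proof.
move=> hR2 hM hw hw0 hwA hu.
set w2 := w *m pinvmx R2.
have ew : w2 *m R2 = w by rewrite mulmxKpV.
apply: (simple0 (w := w2)).
- by apply: contraNneq hw0 => e; rewrite -ew e mul0mx.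
- apply: (row_free_inj hR2); rewrite mul0mx -mulmxA hM mulmxA ew hwA //.
- move=> u hu2; have /sub_rVP [c hc] := hu2.
  have h1 : ((u *m R2) *m A <= w)%MS.
    by rewrite -mulmxA -hM mulmxA hc -scalemxAl ew scalemx_sub.
  have /sub_rVP [d hd] := hu _ (submxMl _ _) h1.
  apply/sub_rVP; exists d; apply: (row_free_inj hR2).
  by rewrite hd -scalemxAl ew.
Qed.
End Gen.


Section Ctrb.
Variable C : numClosedFieldType.

Lemma mxpowSr N (A : 'M[C]_N) i : mxpow A i.+1 = mxpow A i *m A.
Proof.
elim: i => [|i IH]; first by rewrite /mxpow /= mulmx1 mul1mx.
change (A *m mxpow A i.+1 = (A *m mxpow A i) *m A).
by rewrite IH mulmxA.
Qed.

Lemma mxpowE N' (A : 'M[C]_N'.+1) i : mxpow A i = A ^+ i.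
Proof.
elim: i => [|i IH]; first by [].
by rewrite exprS -IH.
Qed.

Lemma CH_pow N' (A : 'M[C]_N'.+1) :
  A ^+ N'.+1 = - \sum_(i < N'.+1) (char_poly A)`_i *: A ^+ i.
Proof.
have ch := Cayley_Hamilton A.
set p := char_poly A in ch *.
have sp : size p = N'.+2 by rewrite size_char_poly.
have lp : p`_N'.+1 = 1.
  by have := char_poly_monic A; rewrite monicE /lead_coef sp => /eqP.
have ep : p = \sum_(i < N'.+2) p`_i *: 'X^i by rewrite -poly_def -sp coefK.
rewrite ep big_ord_recr /= lp scale1r rmorphD /= in ch.
apply/eqP; rewrite -addr_eq0 addrC; apply/eqP.
rewrite -[RHS]ch rmorphXn /= horner_mx_X rmorph_sum /=; congr (_ + _).
apply: eq_bigr => i _.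
by rewrite linearZ /= rmorphXn /= horner_mx_X.
Qed.

Lemma ctrb_stable N m (A : 'M[C]_N) (B : 'M[C]_(N, m)) :
  (ctrb_space A B *m A^T <= ctrb_space A B)%MS.
Proof.
case: N A B => [|N'] A B; first by rewrite flatmx0 sub0mx.
rewrite /ctrb_space sumsmxMr; apply/sumsmx_subP => i _.
have hg : (<<B^T *m mxpow A^T i>> <= B^T *m mxpow A^T i)%MS by rewrite genmxE.
apply: submx_trans (submxMr A^T hg) _.
rewrite -mulmxA -mxpowSr.
case: (ltnP i.+1 N'.+1) => hi.
  apply: (sumsmx_sup (Ordinal hi)) => //; by rewrite genmxE.
have -> : i.+1 = N'.+1 by apply/eqP; rewrite eqn_leq hi ltn_ord.
rewrite mxpowE CH_pow mulmxN mulmx_sumr.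
rewrite -scaleN1r; apply: scalemx_sub; apply: summx_sub => j _.
rewrite -scalemxAr; apply: scalemx_sub.
apply: (sumsmx_sup j) => //; by rewrite genmxE mxpowE.
Qed.
End Ctrb.


Lemma quad_Re (C : numClosedFieldType) (a1 a2 l : C) : 0 < a1 -> 0 < a2 ->
  l ^+ 2 + a2 * l + a1 = 0 -> 'Re l < 0.
Proof.
move=> h1 h2 h.
have r1 : a1 \is Num.real by exact: gtr0_real.
have r2 : a2 \is Num.real by exact: gtr0_real.
have hR := congr1 (fun z => 'Re z) h; have hI := congr1 (fun z => 'Im z) h.
move: hR hI; rewrite /= !raddfD /= expr2 !ReM !ImM.
rewrite (Creal_ReP _ r1) (Creal_ReP _ r2) (Creal_ImP _ r1) (Creal_ImP _ r2).
rewrite !raddf0 !mul0r !mulr0 !subr0 !addr0.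
set x := 'Re l; set y := 'Im l => hR hI.
have rx : x \is Num.real by exact: Creal_Re.
have ry : y \is Num.real by exact: Creal_Im.
rewrite real_ltNge ?real0 //; apply/negP => hx.
have hpos : 0 < x + x + a2 by rewrite ltr_wpDl ?addr_ge0.
have hy : y = 0.
  have : y * (x + x + a2) = 0 by rewrite -hI; ring.
  by move/eqP; rewrite mulf_eq0 (gt_eqF hpos) orbF => /eqP.
move: hR; rewrite hy mulr0 subr0 => /eqP; apply/negP.
rewrite gt_eqF //; apply: (lt_le_trans h1); by rewrite lerDr addr_ge0 // mulr_ge0 // ltW.
Qed.


Section Tr.
Variable C : numClosedFieldType.
Variable n : nat.
Hypothesis hn : (1 < n)%N.
Variables a1 a2 a3 : C.

Definition blkD1 (a b : nat) : C :=
  match a, b with O, S O => -1 | S O, S O => -1 | _, _ => 0 end.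
Definition bD (t a b : nat) : C :=
  match t with 0 => blkA1 a1 a2 a b | 1 => blkC1 C a b | _ => blkD1 a b end.
Definition bO (t a b : nat) : C :=
  match t with 0 => blkA2 a3 a b | _ => blkC2 C a b end.

Definition G (t : nat -> nat) : 'M[C]_(2 * n) :=
  \matrix_(p, q)
    let r := (p %/ 2)%N in let c := (q %/ 2)%N in
    let a := (p %% 2)%N in let b := (q %% 2)%N in
    if c == r then bD (t r) a b
    else if c == ((r + n - 1) %% n)%N then bO (t r) a b
    else 0.

Definition tA (S : {set 'I_n}) (r : nat) : nat := if isAV S r then 1%N else 0%N.

Lemma Ak_G S : Ak a1 a2 a3 S = G (tA S).
Proof.
apply/matrixP => p q; rewrite !mxE /tA.
by case: (isAV S _).
Qed.

Lemma ltn_sI (j : 'I_n) : (2 * j < 2 * n)%N.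
Proof. have := ltn_ord j; lia. Qed.
Lemma ltn_vI (j : 'I_n) : ((2 * j).+1 < 2 * n)%N.
Proof. have := ltn_ord j; lia. Qed.
Definition sI (j : 'I_n) : 'I_(2 * n) := Ordinal (ltn_sI j).
Definition vI (j : 'I_n) : 'I_(2 * n) := Ordinal (ltn_vI j).
Lemma ltn_hv (p : 'I_(2 * n)) : (p %/ 2 < n)%N.
Proof. have := ltn_ord p; lia. Qed.
Definition hv (p : 'I_(2 * n)) : 'I_n := Ordinal (ltn_hv p).

Lemma sIvI_neq j k : sI j != vI k.
Proof. apply/eqP => /(congr1 val) /=; lia. Qed.

Lemma pI_cases (p : 'I_(2 * n)) : p = sI (hv p) \/ p = vI (hv p).
Proof.
case: (boolP (odd p)) => h; [right|left]; apply: val_inj => /=.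
  have : (p %% 2 = 1)%N by rewrite modn2 h. lia.
have : (p %% 2 = 0)%N by rewrite modn2 (negbTE h). lia.
Qed.

Lemma hv_sI j : hv (sI j) = j. Proof. apply: val_inj => /=; lia. Qed.
Lemma hv_vI j : hv (vI j) = j. Proof. apply: val_inj => /=; lia. Qed.

Lemma sum_pair (F : 'I_(2 * n) -> C) :
  \sum_p F p = \sum_(j < n) (F (sI j) + F (vI j)).
Proof.
rewrite (partition_big hv xpredT) //; apply: eq_bigr => j _.
rewrite (bigD1 (sI j)) /= ?hv_sI ?eqxx // (bigD1 (vI j)) /= ?hv_vI ?eqxx ?sIvI_neq //.
rewrite big_pred0 ?addr0 // => p /=.
case: (pI_cases p) => ->; rewrite ?hv_sI ?hv_vI.
  by case: eqP => // ->; rewrite eqxx.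
by case: eqP => // ->; rewrite eqxx !andbF.
by rewrite eq_sym sIvI_neq.
Qed.

Lemma sum_one (H : 'I_n -> C) j :
  (forall r, r != j -> H r = 0) -> \sum_r H r = H j.
Proof.
move=> h; rewrite (bigD1 j) //= big1 ?addr0 // => r /andP [_ hr]; exact: h.
Qed.

Lemma sum_two (H : 'I_n -> C) j k : j != k ->
  (forall r, r != j -> r != k -> H r = 0) -> \sum_r H r = H j + H k.
Proof.
move=> hjk h; rewrite (bigD1 j) //= (bigD1 k) /= 1?eq_sym ?hjk //.
rewrite big1 ?addr0 // => r /andP [h1 h2]; exact: h.
Qed.

Lemma prev_eq (r j : 'I_n) : (j == (r + n - 1) %% n :> nat)%N = (r == ordS j).
Proof.
have hr := ltn_ord r; have hj := ltn_ord j.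
apply/idP/idP.
  move/eqP => e; apply/eqP/val_inj => /=.
  case: (posnP r) => hr0.
    rewrite hr0 add0n modn_small in e; last lia.
    rewrite hr0 e; have -> : (n - 1).+1 = n by lia.
    by rewrite modnn.
  have e2 : ((r + n - 1) %% n = r - 1)%N.
    have -> : (r + n - 1 = (r - 1) + n)%N by lia.
    by rewrite modnDr modn_small; lia.
  rewrite e2 in e; rewrite e modn_small; lia.
move/eqP => -> /=.
case: (ltnP j.+1 n) => hj1.
  rewrite (modn_small hj1); have -> : (j.+1 + n - 1 = j + n)%N by lia.
  by rewrite modnDr modn_small.
have -> : j.+1 = n by lia.
by rewrite modnn add0n modn_small; lia.
Qed.

Lemma ordS_neq (j : 'I_n) : ordS j != j.
Proof.
apply/eqP => /(congr1 val) /=; have := ltn_ord j; case: (ltnP j.+1 n) => h1 h2.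
  by rewrite modn_small //; lia.
have -> : j.+1 = n by lia.
rewrite modnn; lia.
Qed.

Definition ddc (t : nat) : C := match t with 0 => a2 | 1 => 0 | _ => 1 end.
Definition e1 (t : nat) : C := if t == 0%N then a1 else 0.
Definition e3 (t : nat) : C := if t == 0%N then a3 else 0.

Lemma div_sI (j : 'I_n) : ((2 * j) %/ 2 = j)%N. Proof. lia. Qed.
Lemma mod_sI (j : 'I_n) : ((2 * j) %% 2 = 0)%N. Proof. lia. Qed.
Lemma div_vI (j : 'I_n) : ((2 * j).+1 %/ 2 = j)%N. Proof. lia. Qed.
Lemma mod_vI (j : 'I_n) : ((2 * j).+1 %% 2 = 1)%N. Proof. lia. Qed.

Lemma G_sI_sI t r j : G t (sI r) (sI j) = 0.
Proof.
rewrite mxE /= !div_sI !mod_sI.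
by case: ifP => _; [|case: ifP => _]; case: (t r) => [|[|tt]].
Qed.

Lemma G_vI_sI t r j : G t (vI r) (sI j) = if r == j then e1 (t r) else 0.
Proof.
rewrite mxE /= div_sI mod_sI div_vI mod_vI val_eqE eq_sym /e1.
case: eqP => [->|_]; first by case: (t j) => [|[|tt]].
by case: ifP => _; case: (t r) => [|[|tt]].
Qed.

Lemma G_sI_vI t r j : G t (sI r) (vI j) =
  if r == j then -1 else if r == ordS j then 1 else 0.
Proof.
rewrite mxE /= div_sI mod_sI div_vI mod_vI val_eqE eq_sym prev_eq.
by case: eqP => [->|_]; case: (t _) => [|[|tt]] //; case: ifP.
Qed.

Lemma G_vI_vI t r j : G t (vI r) (vI j) =
  if r == j then - ddc (t r) else if r == ordS j then e3 (t r) else 0.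
Proof.
rewrite mxE /= !div_vI !mod_vI val_eqE eq_sym prev_eq /e3.
by case: eqP => _; [|case: ifP => _]; case: (t r) => [|[|tt]] /=; rewrite ?oppr0.
Qed.

Lemma colS t (y : 'rV[C]_(2 * n)) j :
  (y *m G t) 0 (sI j) = y 0 (vI j) * e1 (t j).
Proof.
rewrite mxE sum_pair (sum_one (j:=j)) => [|r hr].
  by rewrite G_sI_sI G_vI_sI eqxx mulr0 add0r.
by rewrite G_sI_sI G_vI_sI (negbTE hr) !mulr0 addr0.
Qed.

Lemma colV t (y : 'rV[C]_(2 * n)) j :
  (y *m G t) 0 (vI j) = - y 0 (sI j) - y 0 (vI j) * ddc (t j)
     + (y 0 (sI (ordS j)) + y 0 (vI (ordS j)) * e3 (t (ordS j))).
Proof.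
have hne : j != ordS j by rewrite eq_sym ordS_neq.
rewrite mxE sum_pair (sum_two hne) => [|r h1 h2].
  rewrite !G_sI_vI !G_vI_vI eqxx (negbTE (ordS_neq j)) eqxx.
  by rewrite mulrN1 mulr1 mulrN.
by rewrite G_sI_vI G_vI_vI (negbTE h1) (negbTE h2) !mulr0 addr0.
Qed.

Lemma w_sI j : wvec C n 0 (sI j) = 1.
Proof. by rewrite mxE /= oddM. Qed.
Lemma w_vI j : wvec C n 0 (vI j) = 0.
Proof. by rewrite mxE /= oddM. Qed.

Lemma row_eq (u v : 'rV[C]_(2 * n)) :
  (forall j, u 0 (sI j) = v 0 (sI j)) -> (forall j, u 0 (vI j) = v 0 (vI j)) -> u = v.
Proof.
move=> hs hv; apply/rowP => p; case: (pI_cases p) => ->; [exact: hs|exact: hv].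
Qed.

Lemma wG t : wvec C n *m G t = 0.
Proof.
apply: row_eq => j.
  by rewrite colS w_vI mul0r mxE.
by rewrite colV !w_sI !w_vI !mul0r subr0 addr0 addNr mxE.
Qed.

Lemma down_ind (Q : nat -> Prop) lo hi :
  Q hi -> (forall k, (lo <= k < hi)%N -> Q k.+1 -> Q k) ->
  forall k, (lo <= k <= hi)%N -> Q k.
Proof.
move=> hQ hs k /andP [h1 h2].
have [d ed] : exists d, hi = (k + d)%N by exists (hi - k)%N; lia.
elim: d k ed h1 h2 => [|d IH] k ed h1 h2; first by rewrite ed addn0 in hQ.
apply: hs; first by apply/andP; split => //; lia.
by apply: IH; lia.
Qed.

Lemma ring_ind (P : 'I_n -> Prop) b : P b ->
  (forall j, j != b -> P (ordS j) -> P j) -> forall j, P j.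
Proof.
move=> hb hs.
pose Q k := forall hk : (k < n)%N, P (Ordinal hk).
have QP : forall j : 'I_n, Q j -> P j.
  by move=> j hj; have := hj (ltn_ord j); congr P; apply: val_inj.
have PQ : forall k (hk : (k < n)%N), P (Ordinal hk) -> Q k.
  by move=> k hk h hk'; congr P: h; apply: val_inj.
have step : forall k, (k.+1 < n)%N -> k != b -> Q k.+1 -> Q k.
  move=> k hk hkb hq hk'; apply: hs.
    by apply: contra hkb => /eqP <-.
  have := hq hk; congr P; apply: val_inj => /=; by rewrite modn_small.
have Qb : Q b by apply: PQ; congr P: hb; apply: val_inj.
have low : forall k, (k <= b)%N -> Q k.
  move=> k hk; apply: (down_ind (lo := 0) Qb) => //.
  move=> i /andP [_ hi] hq; apply: step => //.
    have := ltn_ord b; lia.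
  by apply/eqP; lia.
have Qtop : Q n.-1.
  case: (eqVneq (n.-1) b) => [->//|hne] hk.
  have hk0 : (0 < n)%N by lia.
  apply: hs.
    by apply: contra hne => /eqP <-.
  have := low 0%N (leq0n _) hk0; congr P; apply: val_inj => /=.
  have -> : (n.-1).+1 = n by lia.
  by rewrite modnn.
have high : forall k, (b < k <= n.-1)%N -> Q k.
  move=> k hk; apply: (down_ind (lo := b.+1) Qtop).
    move=> i /andP [h1 h2] hq; apply: step => //; first lia.
    by apply/eqP; lia.
  exact: hk.
move=> j; apply: QP; case: (leqP j b) => hjb; first exact: low.
apply: high; have := ltn_ord j; lia.
Qed.

Lemma alpha (t : nat -> nat) (y : 'rV[C]_(2 * n)) (l : C) (j0 : 'I_n) :
  (t j0 != 0)%N -> y *m G t = l *: y -> l != 0 ->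
  l ^+ 2 + a2 * l + a1 != 0 ->
  (forall j : 'I_n, (2 <= t j)%N -> l + 1 != 0) ->
  (forall j : 'I_n, t j = 1%N -> y 0 (vI j) = 0) -> y = 0.
Proof.
move=> ht0 hy hl hq2 hl1 hq1.
have hS j : y 0 (vI j) * e1 (t j) = l * y 0 (sI j).
  by rewrite -colS hy mxE.
have hV j : - y 0 (sI j) - y 0 (vI j) * ddc (t j)
     + (y 0 (sI (ordS j)) + y 0 (vI (ordS j)) * e3 (t (ordS j)))
   = l * y 0 (vI j).
  by rewrite -colV hy mxE.
pose g (k : 'I_n) := y 0 (sI k) + y 0 (vI k) * e3 (t k).
have step j : g (ordS j) = 0 -> y 0 (sI j) = 0 /\ y 0 (vI j) = 0.
  move=> hg; have := hV j; rewrite -/(g _) hg addr0 => hv.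
  have := hS j; rewrite /e1 /ddc in hv *.
  case ht: (t j) => [|[|tt]] /= in hv *.
  - move=> hs.
    have hq : y 0 (vI j) * (l ^+ 2 + a2 * l + a1) = 0.
      have -> : y 0 (vI j) * (l ^+ 2 + a2 * l + a1) =
         l * (l * y 0 (vI j) - (- y 0 (sI j) - y 0 (vI j) * a2))
         + (y 0 (vI j) * a1 - l * y 0 (sI j)).
        rewrite expr2; ring.
      by rewrite hv hs !subrr mulr0 addr0.
    move: hq => /eqP; rewrite mulf_eq0 (negbTE hq2) orbF => /eqP hq.
    split => //; move: hs; rewrite hq mul0r => /esym /eqP.
    by rewrite mulf_eq0 (negbTE hl) => /eqP.
  - move=> hs; have hq := hq1 j ht; split => //.
    by move: hs; rewrite mulr0 => /esym /eqP; rewrite mulf_eq0 (negbTE hl) => /eqP.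
  - move=> hs; have hp : y 0 (sI j) = 0.
      by move: hs; rewrite mulr0 => /esym /eqP; rewrite mulf_eq0 (negbTE hl) => /eqP.
    split => //.
    have : y 0 (vI j) * (l + 1) = 0.
      by rewrite mulrDr mulr1 mulrC -hv hp oppr0 sub0r mulr1 addNr.
    move/eqP; rewrite mulf_eq0 => /orP [/eqP //|].
    have := hl1 j; rewrite ht => /(_ isT) /negbTE ->; done.
have hg : forall j, g j = 0.
  apply: (ring_ind (b := j0)).
    have := hS j0; rewrite /e1 (negbTE ht0) mulr0 => /esym /eqP.
    rewrite mulf_eq0 (negbTE hl) => /eqP hp.
    by rewrite /g hp /e3 (negbTE ht0) mulr0 addr0.
  move=> j _ hgj; have [hp hq] := step j hgj.
  by rewrite /g hp hq mul0r addr0.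
apply: row_eq => j; rewrite mxE; have [hp hq] := step j (hg _); by [].
Qed.

Lemma beta (t : nat -> nat) (u : 'rV[C]_(2 * n)) (c : C) (j0 : 'I_n) :
  (t j0 != 0)%N -> (forall j : 'I_n, (2 <= t j)%N -> j = j0) ->
  (forall j : 'I_n, t j = 1%N -> u 0 (vI j) = 0) -> a1 != 0 ->
  u *m G t = c *: wvec C n -> u = u 0 (sI j0) *: wvec C n.
Proof.
move=> ht0 h2 hq1 ha1 hu.
have hS j : u 0 (vI j) * e1 (t j) = c * wvec C n 0 (sI j).
  by rewrite -colS hu mxE.
have hc : c = 0.
  by have := hS j0; rewrite /e1 (negbTE ht0) mulr0 w_sI mulr1.
have hV j : - u 0 (sI j) - u 0 (vI j) * ddc (t j)
     + (u 0 (sI (ordS j)) + u 0 (vI (ordS j)) * e3 (t (ordS j))) = 0.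
  by rewrite -colV hu mxE hc mul0r.
have hq01 (j : 'I_n) : (t j < 2)%N -> u 0 (vI j) = 0.
  case ht: (t j) => [|[|tt]] // _; last exact: hq1.
  have := hS j; rewrite ht /e1 /= hc mul0r => /eqP.
  by rewrite mulf_eq0 (negbTE ha1) orbF => /eqP.
have he3 (j : 'I_n) : u 0 (vI j) * e3 (t j) = 0.
  rewrite /e3; case ht: (t j) => [|tt] /=; last by rewrite mulr0.
  by rewrite hq01 ?mul0r // ht.
have hp : forall j, u 0 (sI j) = u 0 (sI j0).
  apply: (ring_ind (b := j0)) => // j hj <-.
  have := hV j; rewrite he3 addr0 hq01 ?mul0r ?subr0.
    by move/eqP; rewrite addrC subr_eq0 => /eqP.
  by rewrite ltnNge; apply: contra hj => /h2 ->.
have hq : forall j, u 0 (vI j) = 0.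
  move=> j; case: (ltnP (t j) 2) => hj; first exact: hq01.
  have ej := h2 j hj; subst j.
  have := hV j0; rewrite he3 addr0 hp /ddc.
  case ht: (t j0) hj => [|[|tt]] // _.
  rewrite mulr1 => h.
  have -> : u 0 (vI j0) = - (- u 0 (sI j0) - u 0 (vI j0) + u 0 (sI j0)) by ring.
  by rewrite h oppr0.
apply: row_eq => j; rewrite mxE.
  by rewrite w_sI mulr1 hp.
by rewrite w_vI mulr0 hq.
Qed.

Lemma isAV_in (S : {set 'I_n}) (j : 'I_n) : isAV S j = (j \in S).
Proof.
rewrite /isAV; apply/existsP/idP => [[i /andP [hi /eqP e]]|hj].
  by have -> : j = i by apply: val_inj.
by exists j; rewrite hj eqxx.
Qed.

Lemma Bk_sI S (k : 'I_n) r : Bk C S (sI k) r = 0.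
Proof.
rewrite mxE /=; have -> : ((2 * k)%N == (2 * enum_val r).+1) = false.
  by apply/eqP; lia.
by [].
Qed.

Lemma Bk_vI S (k : 'I_n) r : Bk C S (vI k) r = (k == enum_val r)%:R.
Proof. by rewrite mxE /= eqSS eqn_pmul2l. Qed.

Lemma colB S (y : 'rV[C]_(2 * n)) r : (y *m Bk C S) 0 r = y 0 (vI (enum_val r)).
Proof.
rewrite mxE sum_pair (sum_one (j := enum_val r)) => [|k hk].
  by rewrite Bk_sI Bk_vI eqxx mulr0 mulr1 add0r.
by rewrite Bk_sI Bk_vI (negbTE hk) !mulr0 addr0.
Qed.

Lemma BM_sI (S : {set 'I_n}) (M : 'M[C]_(#|S|, 2 * n)) k q : (Bk C S *m M) (sI k) q = 0.
Proof. by rewrite mxE big1 // => r _; rewrite Bk_sI mul0r. Qed.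

Lemma BM_vI (S : {set 'I_n}) (M : 'M[C]_(#|S|, 2 * n)) r q :
  (Bk C S *m M) (vI (enum_val r)) q = M r q.
Proof.
rewrite mxE (bigD1 r) //= Bk_vI eqxx mul1r big1 ?addr0 // => r' hr.
by rewrite Bk_vI (inj_eq enum_val_inj) eq_sym (negbTE hr) mul0r.
Qed.

Lemma BM_vIn (S : {set 'I_n}) (M : 'M[C]_(#|S|, 2 * n)) k q : k \notin S ->
  (Bk C S *m M) (vI k) q = 0.
Proof.
move=> hk; rewrite mxE big1 // => r _; rewrite Bk_vI.
case: eqP => [e|_]; last by rewrite mul0r.
by move: (enum_valP r); rewrite -e (negbTE hk).
Qed.

Definition tM (j0 : 'I_n) (r : nat) : nat := if r == j0 then 2%N else 0%N.

Definition Kmat (S : {set 'I_n}) (j0 : 'I_n) : 'M[C]_(#|S|, 2 * n) :=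
  \matrix_(r, q) - G (tM j0) (vI (enum_val r)) q.

Lemma G_sI_indep (t t' : nat -> nat) (k : 'I_n) q : G t (sI k) q = G t' (sI k) q.
Proof. by case: (pI_cases q) => ->; rewrite ?G_sI_sI ?G_sI_vI. Qed.

Lemma G_vI_indep (t t' : nat -> nat) (k : 'I_n) q : t k = t' k -> G t (vI k) q = G t' (vI k) q.
Proof. by move=> e; case: (pI_cases q) => ->; rewrite ?G_vI_sI ?G_vI_vI e. Qed.

Lemma AmBK (S : {set 'I_n}) (j0 : 'I_n) : j0 \in S ->
  Ak a1 a2 a3 S - Bk C S *m Kmat S j0 = G (tM j0).
Proof.
move=> hj0; rewrite Ak_G; apply/matrixP => p q; rewrite [LHS]mxE [X in _ + X]mxE.
case: (pI_cases p) => ->.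
  by rewrite BM_sI subr0; apply: G_sI_indep.
case: (boolP (hv p \in S)) => hS.
  have <- := enum_rankK_in hS hS.
  rewrite BM_vI [Kmat S j0 _ _]mxE opprK.
  have -> : G (tA S) (vI (enum_val (enum_rank_in hS (hv p)))) q = 0.
    rewrite enum_rankK_in //.
    have ht : tA S (hv p) = 1%N by rewrite /tA isAV_in hS.
    case: (pI_cases q) => ->; rewrite ?G_vI_sI ?G_vI_vI ht /e1 /e3 /ddc /=.
      by case: ifP.
    by rewrite oppr0; case: ifP => //; case: ifP.
  by rewrite add0r.
rewrite BM_vIn // subr0; apply: G_vI_indep.
rewrite /tA /tM isAV_in (negbTE hS).
case: eqP => // e; have ee : hv p = j0 by apply: val_inj.
by rewrite ee hj0 in hS.
Qed.

Lemma G_real t p q : 0 < a1 -> 0 < a2 -> 0 < a3 -> G t p q \is Num.real.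
Proof.
move=> h1 h2 h3.
have r1 : a1 \is Num.real by exact: gtr0_real.
have r2 : a2 \is Num.real by exact: gtr0_real.
have r3 : a3 \is Num.real by exact: gtr0_real.
case: (pI_cases p) => ->; case: (pI_cases q) => ->;
  rewrite ?G_sI_sI ?G_vI_sI ?G_sI_vI ?G_vI_vI /e1 /e3 /ddc.
all: repeat (case: ifP => _); rewrite ?realN ?real0 ?real1 //.
all: case: (t _) => [|[|tt]] /=; by rewrite ?realN ?real0 ?real1.
Qed.
End Tr.


Section Main1.
Variable C : numClosedFieldType.

Lemma ctrb_ker N m (A : 'M[C]_N) (B : 'M_(N, m)) (w : 'rV_N) :
  w *m A = 0 -> w *m B = 0 -> (ctrb_space A B <= kermx w^T)%MS.
Proof.
move=> hA hB; apply/sumsmx_subP => i _; rewrite genmxE; apply/sub_kermxP.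
case: i => [[|i]] hi.
  by rewrite /mxpow /= mulmx1 -trmx_mul hB trmx0.
by rewrite mxpowSr -!mulmxA -trmx_mul hA trmx0 !mulmx0.
Qed.

Lemma not_ctrb N m (A : 'M[C]_N) (B : 'M_(N, m)) (w : 'rV_N) :
  w != 0 -> w *m A = 0 -> w *m B = 0 -> ~~ controllable A B.
Proof.
move=> hw hA hB; apply/negP => hc.
have h1 : (1%:M <= ctrb_space A B)%MS by apply: submx_full.
have := submx_trans h1 (ctrb_ker hA hB); rewrite sub_kermx mul1mx => /eqP.
by move/(congr1 trmx); rewrite trmxK trmx0 => e; rewrite e eqxx in hw.
Qed.

Lemma uncontr0 N m (A : 'M[C]_N) (B : 'M_(N, m)) (w : 'rV_N) :
  w != 0 -> w *m A = 0 -> w *m B = 0 -> uncontrollable_eig A B 0.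
Proof.
move=> hw hA hB; apply/andP; split.
  by apply/eigenvalueP; exists w => //; rewrite hA scale0r.
rewrite ltn_neqAle rank_leq_row andbT; apply/negP => hf.
have := row_free_inj hf (x1 := w) (x2 := 0).
rewrite mul0mx mul_mx_row hB mulmxBr hA mul_mx_scalar scale0r subr0 row_mx0.
by move/(_ erefl) => e; rewrite e eqxx in hw.
Qed.

Lemma PBH N m (A : 'M[C]_N) (B : 'M_(N, m)) l :
  uncontrollable_eig A B l ->
  exists y : 'rV_N, [/\ y != 0, y *m A = l *: y & y *m B = 0].
Proof.
case/andP => _ hr.
have : kermx (row_mx (l%:M - A) B) != 0.
  by rewrite kermx_eq0 /row_free neq_ltn hr.
case/rowV0Pn => y; rewrite sub_kermx mul_mx_row => /eqP.
move/eqP; rewrite row_mx_eq0 => /andP [/eqP h1 /eqP h2] hy.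
exists y; split => //.
by move/eqP: h1; rewrite mulmxBr subr_eq0 mul_mx_scalar => /eqP <-.
Qed.

Lemma rV_pos N (w : 'rV[C]_N) : w != 0 -> (0 < N)%N.
Proof. by case: N w => // w; rewrite [w]thinmx0 eqxx. Qed.

Lemma unctrb_mup N m (A : 'M[C]_N) (B : 'M_(N, m)) (w : 'rV_N) :
  w != 0 -> w *m A = 0 -> w *m B = 0 ->
  (forall u : 'rV_N, u *m B = 0 -> (u *m A <= w)%MS -> (u <= w)%MS) ->
  mup 0 (unctrb_char_poly A B) = 1%N.
Proof.
move=> hw hA hB hu.
set V := ctrb_space A B.
have hst : (row_base V *m A^T <= row_base V)%MS.
  rewrite eq_row_base; apply: submx_trans (ctrb_stable A B).
  by apply: submxMr; rewrite eq_row_base.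
have [s [M2 [R2 [hR2 hQ hker hM hchar]]]] := kalman_gen (row_base_free V) hst.
have -> : unctrb_char_poly A B =
    char_poly A %/ char_poly (conjmx (row_base V) A^T) by [].
rewrite hchar mulKp ?monic_neq0 ?char_poly_monic //.
have hwQ : w *m (row_base V)^T = 0.
  have := ctrb_ker hA hB; rewrite -/V -(eq_row_base V) => /sub_kermxP h.
  by rewrite -[w]trmxK -trmx_mul h trmx0.
have hBV : (B^T <= row_base V)%MS.
  rewrite eq_row_base; apply: (sumsmx_sup (Ordinal (rV_pos hw))) => //.
  by rewrite genmxE /mxpow /= mulmx1.
apply: (simple0_restr hR2 hM (hker _ hwQ) hw hA).
move=> u huR huA; apply: hu huA.
have [D ->] := submxP huR; have [Z eZ] := submxP hBV.
by rewrite -[B]trmxK eZ trmx_mul mulmxA -(mulmxA D) hQ mulmx0 mul0mx.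
Qed.
End Main1.


Unset Implicit Arguments.

Theorem theorem4 (C : numClosedFieldType) (n : nat) (S : {set 'I_n})
    (a1 a2 a3 : C) :
  (2 <= n)%N -> (1 <= #|S|)%N -> (#|S| < n)%N ->
  0 < a1 -> 0 < a3 -> a3 < a2 ->
  let A := Ak a1 a2 a3 S in
  let B := Bk C S in
  (* (1) *)
  [/\ ~~ controllable A B,
      wvec C n *m A = 0,
      wvec C n *m B = 0,
      uncontrollable_eig A B 0
    & mup 0 (unctrb_char_poly A B) = 1%N] /\
  (* (2) *)
  ((forall l : C, uncontrollable_eig A B l -> l = 0 \/ 'Re l < 0) /\
   exists K : 'M[C]_(#|S|, 2 * n),
     [/\ K \is a mxOver Num.real,
         mup 0 (char_poly (A - B *m K)) = 1%N
       & forall l : C, eigenvalue (A - B *m K) l -> l != 0 -> 'Re l < 0]).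
Proof.
move=> hn hS1 hSn h1 h3 h32 A B.
have h2 : 0 < a2 := lt_trans h3 h32.
have ha1 : a1 != 0 by rewrite gt_eqF.
have [j0 hj0] : exists j0, j0 \in S by apply/card_gt0P.
set w := wvec C n.
have hw0 : w != 0.
  apply/eqP => e; have := w_sI C hn j0; rewrite -/w e mxE => /eqP.
  by rewrite eq_sym oner_eq0.
have hwA : w *m A = 0 by rewrite /A Ak_G (wG hn).
have hwB : w *m B = 0 by apply/rowP => r; rewrite colB w_vI mxE.
have huB : forall u : 'rV_(2 * n), u *m B = 0 ->
    forall j : 'I_n, tA S j = 1%N -> u 0 (vI hn j) = 0.
  move=> u hu j; rewrite /tA isAV_in; case: ifP => // hj _.
  have := colB hn u (enum_rank_in hj j); rewrite enum_rankK_in // hu mxE.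
  by move=> <-.
have htA2 : forall j : 'I_n, (1 < tA S j)%N -> j = j0.
  by move=> j; rewrite /tA; case: ifP.
have htA0 : tA S j0 != 0%N by rewrite /tA isAV_in hj0.
split; first split.
- exact: not_ctrb hw0 hwA hwB.
- exact: hwA.
- exact: hwB.
- exact: uncontr0 hw0 hwA hwB.
- apply: unctrb_mup hw0 hwA hwB _ => u hu /sub_rVP [c hc].
  rewrite /A Ak_G in hc.
  have -> := beta htA0 htA2 (huB u hu) ha1 hc.
  by rewrite scalemx_sub.
split.
- move=> l hl; have [y [hy0 hyA hyB]] := PBH hl.
  case: (eqVneq l 0) => [->|hl0]; [by left|right].
  case: (eqVneq (l ^+ 2 + a2 * l + a1) 0) => hq; first exact: quad_Re h1 h2 hq.
  exfalso; rewrite /A Ak_G in hyA.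
  have := alpha htA0 hyA hl0 hq _ (huB y hyB).
  by move=> /(_ (fun j hj => False_ind _ (ltac:(by move: hj; rewrite /tA; case: ifP)))) e;
    rewrite e eqxx in hy0.
exists (Kmat hn a1 a2 a3 S j0); rewrite /A /B (AmBK hn a1 a2 a3 hj0).
have htM0 : tM j0 j0 != 0%N by rewrite /tM eqxx.
have htM2 : forall j : 'I_n, (1 < tM j0 j)%N -> j = j0.
  by move=> j; rewrite /tM; case: eqP => // e _; apply: val_inj.
have htM1 : forall (u : 'rV[C]_(2 * n)) (j : 'I_n), tM j0 j = 1%N -> u 0 (vI hn j) = 0.
  by move=> u j; rewrite /tM; case: ifP.
split.
- apply/mxOverP => i q; rewrite mxE rpredN; exact: G_real.
- apply: (simple0 hw0 (wG hn _ _ _ _)) => u /sub_rVP [c hc].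
  have -> := beta htM0 htM2 (htM1 u) ha1 hc.
  by rewrite scalemx_sub.
- move=> l /eigenvalueP [v hv hv0] hl0.
  case: (eqVneq (l + 1) 0) => hl1.
    have -> : l = -1 by apply/eqP; rewrite -addr_eq0 hl1.
    by rewrite raddfN /= (Creal_ReP _ (real1 _)) ltrN10.
  case: (eqVneq (l ^+ 2 + a2 * l + a1) 0) => hq; first exact: quad_Re h1 h2 hq.
  have := alpha htM0 hv hl0 hq (fun _ _ => hl1) (htM1 v).
  by move=> e; rewrite e eqxx in hv0.
Qed.
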